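(* For every alphabet $\Sigma$, every $n\ge 2$ and every $n$-gram LM $p$ over $\Sigma$, there exists a single-layer hard attention transformer LM with $n-1$ attention heads that is weakly equivalent to $p$.
   Context: Let $\Sigma$ be a finite nonempty alphabet and let $\mathrm{EOS},\mathrm{BOS}\notin\Sigma$ be distinct symbols; put $\overline\Sigma=\Sigma\cup\{\mathrm{EOS}\}$ and $\underline\Sigma=\Sigma\cup\{\mathrm{BOS}\}$. A language model (LM) over $\Sigma$ is a probability distribution $p$ on $\Sigma^*$ given autoregressively by $p(y)=p(\mathrm{EOS}\mid y)\prod_{t=1}^{|y|}p(y_t\mid y_{<t})$, where each $p(\cdot\mid y_{<t})$ is a probability distribution on $\overline\Sigma$. Two LMs $p,q$ over $\Sigma$ are weakly equivalent if $p(y)=q(y)$ for all $y\in\Sigma^*$. For $n\ge2$, an $n$-gram LM is an LM such that, after left-padding every string with $n-1$ copies of $\mathrm{BOS}$, $p(y_t\mid y_{<t})=p(y_t\mid y_{t-n+1}\cdots y_{t-1})$ depends only on the history $y_{t-n+1}\cdots y_{t-1}\in\underline\Sigma^{\,n-1}$ (the last $n-1$ symbols of the padded prefix); the distributions on $\overline\Sigma$ assigned to the histories are arbitrary (probabilities may be $0$). Transformers. A transformer of width $D$ processes a string $w=w_1\cdots w_T$ over $\underline\Sigma$ (for an LM, the prefix $y_{<t}$ left-padded with $n-1$ copies of BOS) as follows. A static encoding gives $x^0_j=r(w_j,j)\in\mathbb R^D$ for a function $r:\underline\Sigma\times\mathbb N\to\mathbb R^D$. An attention head with query, key, value, output functions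 $Q,K,V,O:\mathbb R^D\to\mathbb R^D$, scoring function $f:\mathbb R^D\times\mathbb R^D\to\mathbb R$ and normalization function $\pi$ maps $(x_1,\dots,x_T)$ to $(z_1,\dots,z_T)$ where, for each position $s$, $q_s=Q(x_s)$, $k_j=K(x_j)$, $v_j=V(x_j)$, $\sigma=\pi(f(q_s,k_1),\dots,f(q_s,k_s))$ (a probability vector), $a_s=\sum_{j=1}^s\sigma_jv_j+x_s$, $z_s=O(a_s)+a_s$. A layer with $H$ heads applies $H$ heads to the same input and maps the concatenation of the $H$ outputs at each position back to $\mathbb R^D$ with a head-combining function $\mathcal H:\mathbb R^{HD}\to\mathbb R^D$; an $L$-layer transformer composes $L$ layers after $r$. Given a final function $F:\mathbb R^D\to\mathbb R^D$ and an output matrix $E\in(\mathbb R\cup\{-\infty\})^{|\overline\Sigma|\times D}$ (with $\exp(-\infty)=0$), the transformer LM sets $p(y_t\mid y_{<t})=\mathrm{softmax}(E\,F(x^L))_{y_t}$, where $x^L$ is the last-layer representation at the last position of the padded prefix $y_{<t}$. In this definition $r,Q,K,V,O,f,\mathcal H,F$ are arbitrary functions. Hard attention means $\pi=\mathrm{hardmax}$, where $\mathrm{hardmax}(x)_d=1/m$ if $d\in\arg\max x$ with $m=|\arg\max x|$, and $0$ otherwise. Sparse attention means $\pi=\mathrm{sparsemax}$, $\mathrm{sparsemax}(x)=\arg\min_{p\in\Delta}\|p-x\|_2^2$ over the probability simplex $\Delta$. *)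

(* Defs.v *)
From HB Require Import structures.
From mathcomp Require Import all_boot all_order all_algebra.
From mathcomp Require Import all_classical all_reals all_analysis.

Unset Implicit Arguments.
Unset Strict Implicit.
Unset Printing Implicit Defensive.

Import Order.TTheory GRing.Theory Num.Theory.
Local Open Scope ring_scope.

Section LMDefs.
Variables (R : realType) (Sigma : finType).

(* Conventions: the alphabet Sigma is a finite type.
   overline Sigma = Sigma ∪ {EOS} is represented by [option Sigma] with None = EOS.
   underline Sigma = Sigma ∪ {BOS} is represented by [option Sigma] with None = BOS. *)

Definition is_distr (d : option Sigma -> R) : Prop :=
  (forall a, 0 <= d a) /\ \sum_(a : option Sigma) d a = 1.

Definition lm_prob (c : seq Sigma -> option Sigma -> R) (y : seq Sigma) : R :=
  c y None * \prod_(i < size y) c (take i y) (Some (tnth (in_tuple y) i)).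

Definition is_LM (c : seq Sigma -> option Sigma -> R) : Prop :=
  (forall h, is_distr (c h)) /\
  (\esum_(y in [set: seq Sigma]) (lm_prob c y)%:E = 1)%E.

Definition pad (n : nat) (h : seq Sigma) : seq (option Sigma) :=
  nseq n.-1 None ++ map Some h.

Definition ngram_history (n : nat) (h : seq Sigma) : seq (option Sigma) :=
  drop (size h) (pad n h).

Definition is_ngram_LM (n : nat) (c : seq Sigma -> option Sigma -> R) : Prop :=
  is_LM c /\
  exists g : seq (option Sigma) -> option Sigma -> R,
    forall h, c h = g (ngram_history n h).

Definition weakly_equivalent (p q : seq Sigma -> R) : Prop :=
  forall y, p y = q y.

Record attn_head (D : nat) := AttnHead {
  hQ : 'rV[R]_D -> 'rV[R]_D;
  hK : 'rV[R]_D -> 'rV[R]_D;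
  hV : 'rV[R]_D -> 'rV[R]_D;
  hO : 'rV[R]_D -> 'rV[R]_D;
  hf : 'rV[R]_D -> 'rV[R]_D -> R;
  hpi : seq R -> seq R
}.

Arguments hQ {D}. Arguments hK {D}. Arguments hV {D}. Arguments hO {D}.
Arguments hf {D}. Arguments hpi {D}.

Definition hardmax (s : seq R) : seq R :=
  let m := \big[Num.max/head 0 s]_(x <- s) x in
  let c := count (pred1 m) s in
  [seq (if x == m then c%:R^-1 else 0) | x <- s].

(* output z_s of a head at (0-based) position s of the input xs *)
Definition head_at {D} (h : attn_head D) (xs : seq 'rV[R]_D) (s : nat) : 'rV[R]_D :=
  let xsP := take s.+1 xs in
  let x_s := nth 0 xs s in
  let q := hQ h x_s in
  let sigma := hpi h [seq hf h q (hK h xj) | xj <- xsP] in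
  let a := \sum_(j < size xsP) (nth 0 sigma j) *: hV h (nth 0 xsP j) + x_s in
  hO h a + a.

Definition apply_head {D} (h : attn_head D) (xs : seq 'rV[R]_D) : seq 'rV[R]_D :=
  [seq head_at h xs s | s <- iota 0 (size xs)].

Record layer (D : nat) := Layer {
  lH : nat;
  lheads : 'I_lH -> attn_head D;
  lcomb : 'rV[R]_(lH * D) -> 'rV[R]_D
}.

Arguments lH {D}. Arguments lheads {D}. Arguments lcomb {D}.

Definition apply_layer {D} (l : layer D) (xs : seq 'rV[R]_D) : seq 'rV[R]_D :=
  [seq lcomb l (mxvec (\matrix_(i < lH l, j < D)
                         (nth 0 (apply_head (lheads l i) xs) s) 0 j))
  | s <- iota 0 (size xs)].

Record transformer := Transformer {
  tD : nat;
  tr : option Sigma -> nat -> 'rV[R]_tD;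
  tlayers : seq (layer tD);
  tF : 'rV[R]_tD -> 'rV[R]_tD;
  tE : option Sigma -> 'I_tD -> \bar R
}.

Arguments tr : clear implicits.
Arguments tF : clear implicits.
Arguments tE : clear implicits.

(* static encoding, positions are 1-based *)
Definition encode (T : transformer) (w : seq (option Sigma)) : seq 'rV[R]_(tD T) :=
  [seq tr T (nth None w j) j.+1 | j <- iota 0 (size w)].

Definition run (T : transformer) (w : seq (option Sigma)) : seq 'rV[R]_(tD T) :=
  foldl (fun xs l => apply_layer l xs) (encode T w) (tlayers T).

Definition final_rep (T : transformer) (w : seq (option Sigma)) : 'rV[R]_(tD T) :=
  last 0 (run T w).

Definition logit_term (T : transformer) (w : seq (option Sigma)) (a : option Sigma)
  (d : 'I_(tD T)) : \bar R :=
  (tE T a d * (tF T (final_rep T w) 0 d)%:E)%E.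

Definition logit (T : transformer) (w : seq (option Sigma)) (a : option Sigma) : \bar R :=
  (\sum_(d < tD T) logit_term T w a d)%E.

Definition ext_exp (x : \bar R) : R := if x is r%:E then expR r else 0.

(* the softmax is well defined: no +oo entries arise and some logit is finite *)
Definition tlm_valid (n : nat) (T : transformer) : Prop :=
  forall h : seq Sigma,
    (forall a d, logit_term T (pad n h) a d != +oo%E) /\
    exists a, logit T (pad n h) a \is a fin_num.

Definition tlm_cond (n : nat) (T : transformer) (h : seq Sigma) (a : option Sigma) : R :=
  ext_exp (logit T (pad n h) a) / \sum_(b : option Sigma) ext_exp (logit T (pad n h) b).

Definition single_layer_hard (T : transformer) (H : nat) : Prop :=
  exists l : layer (tD T),
    tlayers T = [:: l] /\ lH l = H /\ forall i, hpi (lheads l i) = hardmax.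

End LMDefs.

Arguments lm_prob {R Sigma}.
Arguments is_distr {R Sigma}.
Arguments is_LM {R Sigma}.
Arguments pad {Sigma}.
Arguments ngram_history {Sigma}.
Arguments is_ngram_LM {R Sigma}.
Arguments weakly_equivalent {R Sigma}.
Arguments hardmax {R}.
Arguments tlm_valid {R Sigma}.
Arguments tlm_cond {R Sigma}.
Arguments single_layer_hard {R Sigma}.

(* Main.v *)
Require Import Defs.
From HB Require Import structures.
From mathcomp Require Import all_boot all_order all_algebra.
From mathcomp Require Import all_classical all_reals all_analysis.
From mathcomp Require Import zify.
Import Order.TTheory GRing.Theory Num.Theory.

Section H.
Variable R : realType.
Local Open Scope ring_scope.

Lemma bigmax_one (l : seq R) (x0 : R) : x0 <= 1 -> all (fun x => x <= 1) l ->
  (1 : R) \in l -> \big[Num.max/x0]_(x <- l) x = 1.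
Proof.
move=> hx0; elim: l => [|a l IH] //= /andP[ha hl].
rewrite in_cons big_cons => /orP[/eqP<-|h1].
  apply: max_l; rewrite big_seq; elim/big_ind: _ => //.
    by move=> x y hx hy; rewrite ge_max hx hy.
  by move=> x /(allP hl).
by rewrite IH // max_r.
Qed.

Lemma hardmax01 (l : seq R) : all (fun x => (x == 0) || (x == 1)) l ->
  count (pred1 1) l = 1%N -> hardmax l = l.
Proof.
move=> Hall Hc; rewrite /hardmax.
have h1 : (1 : R) \in l by rewrite -has_pred1 has_count Hc.
have hle : all (fun x => x <= 1) l.
  by apply/allP => x /(allP Hall) /orP[/eqP->|/eqP->]; rewrite ?ler01.
rewrite bigmax_one //; last first.
  by case: l {Hall Hc h1} hle => //= a l /andP[].
rewrite Hc invr1 -[RHS]map_id; apply/eq_in_map => x /(allP Hall) /orP[/eqP->|/eqP->].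
  by rewrite eq_sym oner_eq0.
by rewrite eqxx.
Qed.
End H.

Section H2.
Variables (R : realType) (Sigma : finType) (D : nat).
Local Open Scope ring_scope.

Definition code (a : option Sigma) : R := (enum_rank a)%:R.
Definition enc (a : option Sigma) (j : nat) : 'rV[R]_D.+3 :=
  \row_(d < D.+3) (if (d:nat) == 0%N then j%:R else if (d:nat) == 1%N then code a else 0).
Definition Vf (x : 'rV[R]_D.+3) : 'rV[R]_D.+3 :=
  \row_(d < D.+3) (if (d:nat) == 2%N then x 0 (inord 1) else 0).
Definition headi (i : nat) : attn_head R D.+3 :=
  AttnHead R D.+3 (fun x => x) (fun x => x) Vf (fun _ => 0)
    (fun q k => if k 0 (inord 0) + i%:R == q 0 (inord 0) then 1 else 0) hardmax.

Lemma enc0 a j : enc a j 0 (inord 0) = j%:R.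
Proof. by rewrite /enc mxE inordK. Qed.

Lemma head_enc (u : nat -> option Sigma) k s i : (s < k)%N -> (i <= s)%N ->
  head_at R (headi i) [seq enc (u j) j.+1 | j <- iota 0 k] s 0 (inord 2) = code (u (s - i)%N).
Proof.
move=> hsk his.
set e := fun j => enc (u j) j.+1.
have hxs : nth 0 [seq e j | j <- iota 0 k] s = e s.
  by rewrite (nth_map 0%N) ?size_iota // nth_iota.
have hxsP : take s.+1 [seq e j | j <- iota 0 k] = [seq e j | j <- iota 0 s.+1].
  by rewrite -map_take take_iota; congr (map _ (iota _ _)); lia.
set f := fun j : nat => if (j + i == s)%N then (1 : R) else 0.
have hsc : [seq @hf R D.+3 (headi i) (@hQ R D.+3 (headi i) (e s)) (@hK R D.+3 (headi i) xj) | xj <- [seq e j | j <- iota 0 s.+1]]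
    = [seq f j | j <- iota 0 s.+1].
  rewrite -map_comp; apply/eq_map => j /=; rewrite /e !enc0 -natrD eqr_nat /f.
  by rewrite addSn eqSS.
have hpi : @hpi R D.+3 (headi i) = hardmax by [].
rewrite /head_at hxsP hxs hsc hpi hardmax01; last first.
- rewrite count_map.
  have -> : count (preim f (pred1 1)) (iota 0 s.+1) = count (pred1 (s - i)%N) (iota 0 s.+1).
    apply: eq_count => j /=; rewrite /f.
    have -> : (j + i == s) = (j == s - i)%N by apply/eqP/eqP; lia.
    by case: (j == s - i)%N; rewrite ?eqxx // eq_sym oner_eq0.
   rewrite count_uniq_mem ?iota_uniq // mem_iota /=.
  have -> : ((s - i)%N < s.+1)%N by lia.
  by [].
- by apply/allP => x /mapP[j _ ->]; rewrite /f; case: ifP; rewrite eqxx ?orbT.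
have hO : @hO R D.+3 (headi i) = fun _ => 0 by [].
have hV : @hV R D.+3 (headi i) = Vf by [].
rewrite hO hV add0r.
have hlt : ((s - i)%N < size [seq e j | j <- iota 0 s.+1])%N by rewrite size_map size_iota; lia.
rewrite (bigD1 (Ordinal hlt)) // big1 ?addr0; last first.
  move=> j /andP[_ hj].
  have hsz : size [seq e j | j <- iota 0 s.+1] = s.+1 by rewrite size_map size_iota.
  have hj' : (j < s.+1)%N by apply: (leq_trans (ltn_ord j)); rewrite hsz.
  rewrite (nth_map 0%N) ?size_iota // nth_iota //.
  rewrite /f add0n.
  have -> : (j + i == s)%N = false.
    apply/negbTE; apply: contra hj => /eqP hj; apply/eqP.
    apply: val_inj => /=.
    have H2 : forall a b c : nat, (a + b)%N = c -> a = (c - b)%N by move=> *; lia.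
    exact: H2 hj.
  by rewrite scale0r.
rewrite /= addr0 -[f 0%N :: _]/(map f (iota 0 s.+1)) -[e 0%N :: _]/(map e (iota 0 s.+1)).
rewrite (nth_map 0%N) ?size_iota; last lia.
rewrite nth_iota; last lia.
rewrite /f add0n subnK // eqxx scale1r (nth_map 0%N) ?size_iota; last lia.
rewrite nth_iota; last lia.
rewrite add0n /e /Vf /enc.
by rewrite !mxE !inordK //= addr0.

Qed.
End H2.

Section H3.
Variables (R : realType) (Sigma : finType) (m : nat).
Variable g : seq (option Sigma) -> option Sigma -> R.
Local Open Scope ring_scope.

Definition NN := #|{: option Sigma}|.
Definition Dn := (m + NN + NN)%N.

Definition lcombf (v : 'rV[R]_(m.+1 * Dn.+3)) : 'rV[R]_Dn.+3 :=
  \row_(d < Dn.+3) v 0 (mxvec_index (inord d : 'I_m.+1) (inord 2)).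

Definition lay : layer R Dn.+3 :=
  Layer R Dn.+3 m.+1 (fun i => headi R Dn (i : nat)) lcombf.

Definition decode (r : R) : option Sigma := odflt None [pick a | code R Sigma a == r].

Lemma decode_code a : decode (code R Sigma a) = a.
Proof.
rewrite /decode; case: pickP => [a' /eqP h|h]; last by move: (h a); rewrite eqxx.
by move: h; rewrite /code => /eqP; rewrite eqr_nat => /eqP /ord_inj /enum_rank_inj ->.
Qed.

Definition hist (x : 'rV[R]_Dn.+3) : seq (option Sigma) :=
  [seq decode (x 0 (inord (m - k))) | k <- iota 0 m.+1].

Definition d1 (a : option Sigma) : nat := (3 + enum_rank a)%N.
Definition d2 (a : option Sigma) : nat := (3 + NN + enum_rank a)%N.

Definition Fv (q : option Sigma -> R) (d : nat) : R :=
  match [pick a | d == d1 a] with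
  | Some a => ln (q a)
  | None => match [pick a | d == d2 a] with Some a => (q a == 0)%:R | None => 0 end
  end.

Definition Ff (x : 'rV[R]_Dn.+3) : 'rV[R]_Dn.+3 := \row_(d < Dn.+3) Fv (g (hist x)) d.

Definition Ee (a : option Sigma) (d : 'I_Dn.+3) : \bar R :=
  if (d : nat) == d1 a then 1%E else if (d : nat) == d2 a then -oo%E else 0%E.

Definition TT : transformer R Sigma :=
  Transformer R Sigma Dn.+3 (fun a j => enc R Sigma Dn a j) [:: lay] Ff Ee.

Lemma rank_lt (a : option Sigma) : (enum_rank a < NN)%N.
Proof. exact: ltn_ord. Qed.

Lemma Fv_d1 q a : Fv q (d1 a) = ln (q a).
Proof.
rewrite /Fv; case: pickP => [a' /eqP h|h]; last by move: (h a); rewrite eqxx.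
by move: h; rewrite /d1 => /addnI /ord_inj /enum_rank_inj ->.
Qed.

Lemma Fv_d2 q a : Fv q (d2 a) = (q a == 0)%:R.
Proof.
rewrite /Fv; case: pickP => [a' /eqP h|_].
  by move: h (rank_lt a') ; rewrite /d1 /d2; lia.
case: pickP => [a' /eqP h|h]; last by move: (h a); rewrite eqxx.
by move: h; rewrite /d2 => /addnI /ord_inj /enum_rank_inj ->.
Qed.

Lemma final_rep_pad h d : (d <= m)%N ->
  final_rep R Sigma TT (pad m.+2 h) 0 (inord d) =
  code R Sigma (nth None (pad m.+2 h) (m + size h - d)%N).
Proof.
move=> hd.
set w := pad m.+2 h.
have hw : size w = (m.+1 + size h)%N by rewrite /w /pad size_cat size_nseq size_map.
rewrite /final_rep.
have -> : run R Sigma TT w = @apply_layer R _ lay [seq enc R Sigma Dn (nth None w j) j.+1 | j <- iota 0 (size w)] by [].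
rewrite /apply_layer.
rewrite size_map size_iota hw -nth_last size_map size_iota (nth_map 0%N) ?size_iota; last lia.
rewrite nth_iota; last lia.
have -> : lcomb R Dn.+3 lay = lcombf by [].
rewrite /lcombf mxE mxvecE mxE.
rewrite /apply_head (nth_map 0%N) ?size_map ?size_iota; last lia.
rewrite nth_iota; last lia.
have -> : forall i, lheads R Dn.+3 lay i = headi R Dn i by [].
rewrite (@inordK Dn.+2 d); last by rewrite /Dn; lia.
rewrite (@inordK m d); last lia.
rewrite !add0n head_enc; [| lia | lia].
by congr (code R Sigma (nth None w _)); lia.
Qed.

Lemma hist_final h : hist (final_rep R Sigma TT (pad m.+2 h)) = ngram_history m.+2 h.
Proof.
apply: (@eq_from_nth _ None).
  by rewrite size_map size_iota /ngram_history size_drop /pad size_cat size_nseq size_map; lia.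
move=> k; rewrite size_map size_iota => hk.
rewrite (nth_map 0%N) ?size_iota // nth_iota // add0n final_rep_pad; last lia.
rewrite decode_code /ngram_history nth_drop; congr nth; lia.
Qed.

Lemma logit_TT h a : logit R Sigma TT (pad m.+2 h) a =
  (if g (ngram_history m.+2 h) a == 0%R then -oo else (ln (g (ngram_history m.+2 h) a))%:E)%E.
Proof.
rewrite /logit /logit_term.
have -> : tF R Sigma TT = Ff by [].
have -> : tE R Sigma TT = Ee by [].
under eq_bigr do rewrite /Ff mxE hist_final.
set q := g (ngram_history m.+2 h).
have hd1 : (d1 a < Dn.+3)%N by rewrite /d1 /Dn; have := rank_lt a; lia.
have hd2 : (d2 a < Dn.+3)%N by rewrite /d2 /Dn /NN; have := rank_lt a; rewrite /NN; lia.
have hne : (Ordinal hd2 != Ordinal hd1).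
  by apply/eqP => /(congr1 val) /=; rewrite /d1 /d2; have := rank_lt a; lia.
rewrite (bigD1 (Ordinal hd1)) // (bigD1 (Ordinal hd2)) /=; last by rewrite hne.
rewrite big1; last first.
  move=> d /andP[h1 h2]; rewrite /Ee.
  have -> : ((d : nat) == d1 a) = false by apply/negbTE; apply: contra h1 => /eqP h1; apply/eqP; apply: val_inj.
  have -> : ((d : nat) == d2 a) = false by apply/negbTE; apply: contra h2 => /eqP h2; apply/eqP; apply: val_inj.
  by rewrite mul0e.
rewrite /Ee /= eqxx Fv_d1 Fv_d2 mul1e.
have -> : (d2 a == d1 a) = false by apply/negbTE; rewrite /d1 /d2; apply/eqP; have := rank_lt a; lia.
rewrite eqxx adde0.
by case: (q a == 0); rewrite ?mule1 ?addeNy ?mule0 ?adde0.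
Qed.
End H3.

Theorem theorem3p1 (R : realType) (Sigma : finType) (n : nat)
  (p : seq Sigma -> option Sigma -> R) :
  (0 < #|Sigma|)%N -> (2 <= n)%N -> is_ngram_LM n p ->
  exists T : transformer R Sigma,
    single_layer_hard T (n - 1) /\ tlm_valid n T /\
    weakly_equivalent (lm_prob p) (lm_prob (tlm_cond n T)).
Proof.
move=> _ hn [[Hd _] [g Hg]].
case: n hn Hg => [|[|m]] // _ Hg.
exists (TT R Sigma m g).
have hq : forall h, g (ngram_history m.+2 h) = p h by move=> h; rewrite Hg.
have hext : forall h a, ext_exp R (logit R Sigma (TT R Sigma m g) (pad m.+2 h) a) = p h a.
  move=> h a; rewrite logit_TT hq.
  have [h0 _] := Hd h.
  case: eqP => [->//|hne]; rewrite /ext_exp lnK //.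
  by rewrite posrE lt_def h0 andbT; apply/eqP.
have hcond : forall h a, tlm_cond m.+2 (TT R Sigma m g) h a = p h a.
  move=> h a; rewrite /tlm_cond.
  under eq_bigr do rewrite hext.
  by have [_ ->] := Hd h; rewrite hext divr1.
split; [|split].
- exists (lay R Sigma m); split => //; split => //.
- move=> h; split.
    move=> a d; rewrite /logit_term /=.
    rewrite /Ee; case: ifP => _; first by rewrite mul1e.
    case: ifP => [/eqP hd2|_]; last by rewrite mul0e.
    rewrite /Ff mxE hd2 Fv_d2 hist_final.
    by case: (_ == 0)%R; rewrite ?mule1 ?mule0.
  have [a ha] : exists a, p h a != 0%R.
    case: (pickP (fun a => p h a != 0%R)) => [a ha|hn]; first by exists a.
    have [_ hs] := Hd h; move: hs.
    rewrite big1 => [|a _]; last by move: (hn a) => /negbFE/eqP.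
    by move/eqP; rewrite eq_sym oner_eq0.
  exists a; rewrite logit_TT hq.
  by rewrite (negbTE ha).
- have E : tlm_cond m.+2 (TT R Sigma m g) = p.
    by apply/funext => h; apply/funext => a; exact: hcond.
  by move=> y; rewrite E.
Qed.
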